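(* Let $Y,Z$ be finite-dimensional real or complex vector spaces, let $F\colon Y\to Z$ be a $C^2$ map, let $\mathcal A\subset L(Y,Y)$, let $\alpha\colon Z\to\mathcal A$, and let $f(y)=\alpha(F(y))y$. (a) If there exists $\beta\colon\mathcal A\to L(Z,Z)$ such that $F'(y)Ty=\beta(T)F(y)$ for all $y\in Y$ and $T\in\mathcal A$, then $f$ is $F$-related to $g(z)=\beta(\alpha(z))z$, i.e. $F'(y)f(y)=g(F(y))$ for all $y\in Y$. (b) If, in addition to the hypothesis of (a), $\mathcal A$ is a Jordan operator algebra on $Y$, then $F''(y)(f(y),f(y))=\gamma(F(y))$ for all $y\in Y$, where \[ \gamma(z)=\bigl[\beta(\alpha(z))^2-\beta(\alpha(z)^2)\bigr]z. \]
   Context: A Jordan operator algebra on $Y$ is a linear subspace of $L(Y,Y)$ closed under the Jordan product $S\bullet T:=\tfrac12(ST+TS)$. $L(Y,Y)$ denotes the linear maps $Y\to Y$. *)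

(* Defs.v *)
From HB Require Import structures.
From mathcomp Require Import all_boot all_order all_algebra.
From mathcomp Require Import all_classical all_reals all_analysis.
Set Implicit Arguments. Unset Strict Implicit. Unset Printing Implicit Defensive.
Import Order.TTheory GRing.Theory Num.Theory.
Import numFieldNormedType.Exports.
Local Open Scope classical_set_scope.
Local Open Scope ring_scope.

(* Y = 'rV[K]_n, Z = 'rV[K]_m; a linear map T in L(Y,Y) is a matrix
   T : 'M[K]_n acting by y |-> y *m T.  Under this convention the
   composition S o T corresponds to the matrix product T *m S. *)

Definition d2 (K : numFieldType) (n m : nat) (F : 'rV[K]_n -> 'rV[K]_m)
  (y u v : 'rV[K]_n) : 'rV[K]_m :=
  'd (fun x => 'd F x u) y v.

Definition C2 (K : numFieldType) (n m : nat) (F : 'rV[K]_n -> 'rV[K]_m) : Prop :=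
  (forall y, differentiable F y) /\
  (forall u y, differentiable (fun x => 'd F x u) y) /\
  (forall u v, continuous (fun y => d2 F y u v)).

Definition jordan_operator_algebra (K : numFieldType) (n : nat)
  (A : set 'M[K]_n) : Prop :=
  A 0 /\
  (forall S T, A S -> A T -> A (S + T)) /\
  (forall (c : K) T, A T -> A (c *: T)) /\
  (forall S T, A S -> A T -> A (2%:R^-1 *: (S *m T + T *m S))).

(* Main.v *)
Require Import Defs.
From HB Require Import structures.
From mathcomp Require Import all_boot all_order all_algebra.
From mathcomp Require Import all_classical all_reals all_analysis.
Import Order.TTheory GRing.Theory Num.Theory.
Import numFieldNormedType.Exports.
Local Open Scope classical_set_scope.
Local Open Scope ring_scope.

Lemma diff_line (K : numFieldType) (V : normedModType K) (u y : V) (t : K) :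
  differentiable (fun h : K => h *: u + y) t.
Proof. by apply: differentiableD. Qed.

Lemma diff_mulmxr (K : numFieldType) (m p : nat) (B : 'M[K]_(m, p)) (z : 'rV[K]_m) :
  differentiable (fun x : 'rV[K]_m => x *m B) z.
Proof.
have -> : (fun x : 'rV[K]_m => x *m B) = \sum_(k < m) (fun x : 'rV[K]_m => x 0 k *: row k B).
  apply/funext => x; rewrite mulmx_sum_row; rewrite fct_sumE //.
apply: differentiable_sum => k.
apply: differentiableZl; exact: differentiable_coord.
Qed.

Lemma diff_by_lim (K : numFieldType) (V W : normedModType K) (G : V -> W) y u L :
  differentiable G y ->
  (fun h : K => h^-1 *: (G (h *: u + y) - G y)) @ 0^' --> L -> 'd G y u = L.
Proof. by move=> dG hL; rewrite -deriveE //; apply: cvg_lim. Qed.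

Lemma d_mulmxr (K : numFieldType) (m p : nat) (B : 'M[K]_(m, p)) (z v : 'rV[K]_m) :
  'd (fun x : 'rV[K]_m => x *m B) z v = v *m B.
Proof.
apply: diff_by_lim; first exact: diff_mulmxr.
apply: cvg_trans (cvg_cst (v *m B)).
apply: near_eq_cvg; apply: filterS (nbhs_dnbhs_neq 0) => h hneq /=.
by rewrite mulmxDl addrK -scalemxAl scalerA mulVf ?scale1r.
typeclasses eauto.
Qed.
Lemma d_comp_mulmxr (K : numFieldType) (n m p : nat) (F : 'rV[K]_n -> 'rV[K]_m)
  (B : 'M[K]_(m, p)) y u :
  differentiable F y -> 'd (fun x => F x *m B) y u = 'd F y u *m B.
Proof.
move=> dF.
have := congr1 (fun k => k u) (diff_comp dF (@diff_mulmxr K m p B (F y))).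
rewrite /= d_mulmxr => <-.
by [].
Qed.

Lemma diff_comp_mulmxr (K : numFieldType) (n m p : nat) (F : 'rV[K]_n -> 'rV[K]_m)
  (B : 'M[K]_(m, p)) y :
  differentiable F y -> differentiable (fun x => F x *m B) y.
Proof.
move=> dF.
exact: (differentiable_comp dF (@diff_mulmxr K m p B (F y))).
Qed.

Lemma main_calc (K : numFieldType) (n m : nat) (F : 'rV[K]_n -> 'rV[K]_m)
  (T : 'M[K]_n) (B B2 : 'M[K]_m) (y : 'rV[K]_n) :
  (forall y, differentiable F y) ->
  (forall u y, differentiable (fun x => 'd F x u) y) ->
  (forall x, 'd F x (x *m T) = F x *m B) ->
  'd F y (y *m (T *m T)) = F y *m B2 ->
  'd (fun x => 'd F x (y *m T)) y (y *m T) = F y *m (B *m B - B2).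
Proof.
move=> dF ddF hF hF2.
have hG : forall x, 'd F x (y *m T) = F x *m B - 'd F x ((x - y) *m T).
  move=> x; rewrite -hF -linearB mulmxBl opprB addrC subrK.
  reflexivity.
set u := y *m T.
apply: diff_by_lim; first exact: ddF.
have hq : (fun h : K => h^-1 *: (F (h *: u + y) - F y)) @ 0^' --> 'd F y u.
  rewrite -deriveE; last exact: dF.
  have hd : derivable F y u by apply: diff_derivable; exact: dF.
  exact: hd.
have hqB : (fun h : K => (h^-1 *: (F (h *: u + y) - F y)) *m B) @ 0^' --> 'd F y u *m B.
  have cB := differentiable_continuous (@diff_mulmxr K m m B ('d F y u)).
  exact: (continuous_cvg _ cB hq).
have hc : (fun h : K => 'd F (h *: u + y) (u *m T)) @ 0^' --> 'd F y (u *m T).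
  set c := (fun x => 'd F x (u *m T)) \o (fun h : K => h *: u + y).
  have cc : {for 0, continuous c}.
    apply: differentiable_continuous; apply: differentiable_comp.
      exact: diff_line.
    exact: ddF.
  have := (continuous_withinNx c 0).1 cc.
  by rewrite /c /= scale0r add0r.
have -> : F y *m (B *m B - B2) = 'd F y u *m B - 'd F y (u *m T).
  rewrite /u -mulmxA hF2 hF mulmxBr mulmxA.
  reflexivity.
apply: cvg_trans (cvgB hqB hc).
apply: near_eq_cvg.
apply: filterS (nbhs_dnbhs_neq 0) => h hneq.
rewrite !fctE.
have e1 : 'd F y u = F y *m B := hF y.
have e2 := hG (h *: u + y).
rewrite addrK -scalemxAl linearZ /= in e2.
move: e2; move: (h *: u + y) => x e2.
have alg : forall p q r : 'rV[K]_m, p = F x *m B - h *: r -> q = F y *m B ->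
    h^-1 *: (F x - F y) *m B - r = h^-1 *: (p - q).
  move=> p q r -> ->.
  rewrite -scalemxAl mulmxBl [in RHS]addrAC [in RHS]scalerBr [in RHS]scalerA mulVf // scale1r.
  idtac.
  reflexivity.
apply: alg.
  exact: e2.
exact: e1.
Qed.

Theorem theorem3p2 (K : numFieldType) (n m : nat)
  (F : 'rV[K]_n -> 'rV[K]_m) (A : set 'M[K]_n)
  (alpha : 'rV[K]_m -> 'M[K]_n) (beta : 'M[K]_n -> 'M[K]_m) :
  C2 F ->
  (forall z, A (alpha z)) ->
  (forall y T, A T -> 'd F y (y *m T) = F y *m beta T) ->
  let f := fun y => y *m alpha (F y) in
  let g := fun z => z *m beta (alpha z) in
  let gamma := fun z =>
    z *m (beta (alpha z) *m beta (alpha z) - beta (alpha z *m alpha z)) in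
  (forall y, 'd F y (f y) = g (F y)) /\
  (jordan_operator_algebra A -> forall y, d2 F y (f y) (f y) = gamma (F y)).
Proof.
move=> [dF [ddF _]] hA hF f g gamma; split.
  move=> y; exact: (hF y (alpha (F y)) (hA _)).
move=> [_ [_ [_ AJ]]] y.
have ATT : A (alpha (F y) *m alpha (F y)).
  have E : alpha (F y) *m alpha (F y) = (2%:R : K)^-1 *: (alpha (F y) *m alpha (F y) + alpha (F y) *m alpha (F y)).
    by rewrite -mulr2n -[X in _ *: X]scaler_nat scalerA mulVf ?scale1r // pnatr_eq0.
  rewrite E; apply: AJ; exact: hA.
exact: (@main_calc K n m F (alpha (F y)) (beta (alpha (F y))) (beta (alpha (F y) *m alpha (F y))) y
  dF ddF (fun x => hF x (alpha (F y)) (hA _)) (hF y _ ATT)).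
Qed.
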